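(* Let $d\ge 1$ and let $(X_1,\ldots,X_d,Y)$ be a random vector with continuous marginal distribution functions $F_{X_1},\ldots,F_{X_d},F_Y$ and $(d+1)$-dimensional copula $C$. Let $(U_1,\ldots,U_d,V)$ be a random vector with standard uniform marginals and copula $C$. Fix $\boldsymbol{\alpha}=(\alpha_1,\ldots,\alpha_d)\in[0,1)^d$ with $C(\boldsymbol{\alpha},1)<1$, and let $A_{\boldsymbol U}=\{\exists\, i: U_i>\alpha_i\}$ and $A_{\boldsymbol X}=\{\exists\, i: X_i>\mathrm{VaR}_{\alpha_i}(X_i)\}$. Then: (a) the distribution function of $V$ conditional on $A_{\boldsymbol U}$ is $$F_{V|A_{\boldsymbol U}}(v)=\frac{v-C(\boldsymbol{\alpha},v)}{1-C(\boldsymbol{\alpha},1)},\qquad v\in[0,1],$$ and this function is a distortion function; (b) the distribution function of $Y$ conditional on $A_{\boldsymbol X}$ is $F_{Y|A_{\boldsymbol X}}(y)=F_{V|A_{\boldsymbol U}}(F_Y(y))$ for all $y\in\mathbb{R}$.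
   Context: For a $(d+1)$-dimensional copula $C$, write $C(\boldsymbol{\alpha},v)=C(\alpha_1,\ldots,\alpha_d,v)$. For a random variable $Z$ with distribution function $F$, $F^{-1}(t)=\inf\{x\in\mathbb{R}:F(x)\ge t\}$ and $\mathrm{VaR}_t(Z)=F^{-1}(t)$. A distortion function is a nondecreasing function $h:[0,1]\to[0,1]$ with $h(0)=0$ and $h(1)=1$. *)

(* Defs.v *)
From HB Require Import structures.
From mathcomp Require Import all_boot all_order all_algebra.
From mathcomp Require Import all_classical all_reals all_analysis.
Set Implicit Arguments. Unset Strict Implicit. Unset Printing Implicit Defensive.
Import Order.TTheory GRing.Theory Num.Theory.
Local Open Scope classical_set_scope.
Local Open Scope ring_scope.

Definition Fr (dT : measure_display) (T : measurableType dT) (R : realType)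
  (P : probability T R) (Z : {RV P >-> R}) : R -> R :=
  fun r => fine (cdf Z r).

(* VaR_t(Z) = F^{-1}(t) = inf {x in R : F(x) >= t}, in the extended reals
   (inf of the empty set is +oo, inf of an unbounded-below set is -oo) *)
Definition VaR (dT : measure_display) (T : measurableType dT) (R : realType)
  (P : probability T R) (Z : {RV P >-> R}) (t : R) : \bar R :=
  ereal_inf [set (x%:E)%E | x in [set x : R | t <= Fr Z x]].

Definition condprob (dT : measure_display) (T : measurableType dT) (R : realType)
  (P : probability T R) (B A : set T) : R :=
  fine (P (B `&` A)) / fine (P A).

Definition joint_cdf (dT : measure_display) (T : measurableType dT) (R : realType)
  (P : probability T R) (n : nat) (Z : 'I_n -> {RV P >-> R}) (z : 'I_n -> R) : R :=
  fine (P [set t | forall i, Z i t <= z i]).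

Definition in_cube (R : realType) (n : nat) (u : 'I_n -> R) : Prop :=
  forall i, 0 <= u i <= 1.

(* n-dimensional copula (values on [0,1]^n): grounded, uniform margins,
   n-increasing *)
Definition is_copula (R : realType) (n : nat) (C : ('I_n -> R) -> R) : Prop :=
  [/\ (forall u, in_cube u -> (exists i, u i = 0) -> C u = 0),
      (forall (i : 'I_n) (a : R), 0 <= a <= 1 ->
          C (fun j => if j == i then a else 1) = a) &
      (forall a b : 'I_n -> R, in_cube a -> in_cube b -> (forall i, a i <= b i) ->
          0 <= \sum_(S : {set 'I_n}) (-1) ^+ #|S| *
                 C (fun i => if i \in S then a i else b i))].

Definition copula_of (dT : measure_display) (T : measurableType dT) (R : realType)
  (P : probability T R) (n : nat) (C : ('I_n -> R) -> R)
  (Z : 'I_n -> {RV P >-> R}) : Prop :=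
  is_copula C /\ forall z, joint_cdf Z z = C (fun i => Fr (Z i) (z i)).

(* the random vector (X_1, ..., X_d, Y): indices 0..d-1 are X, index d is Y *)
Definition xy (dT : measure_display) (T : measurableType dT) (R : realType)
  (P : probability T R) (d : nat) (X : 'I_d -> {RV P >-> R}) (Y : {RV P >-> R}) :
  'I_d.+1 -> {RV P >-> R} :=
  fun i => match unlift ord_max i with Some j => X j | None => Y end.

Definition av (R : realType) (d : nat) (alpha : 'I_d -> R) (v : R) : 'I_d.+1 -> R :=
  fun i => match unlift ord_max i with Some j => alpha j | None => v end.

Definition distortion (R : realType) (h : R -> R) : Prop :=
  [/\ (forall v, 0 <= v <= 1 -> 0 <= h v <= 1),
      (forall v w, 0 <= v -> v <= w -> w <= 1 -> h v <= h w),
      h 0 = 0 & h 1 = 1].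

(* Main.v *)
Require Import Defs.
From HB Require Import structures.
From mathcomp Require Import all_boot all_order all_algebra.
From mathcomp Require Import all_classical all_reals all_analysis.
Import Order.TTheory GRing.Theory Num.Theory numFieldNormedType.Exports.
Local Open Scope classical_set_scope.
Local Open Scope ring_scope.
From mathcomp Require Import lra.
Section pr.
Context {d : measure_display} {T : measurableType d} {R : realType} (P : probability T R).
Definition pr (A : set T) : R := fine (P A).

Lemma prE A : measurable A -> P A = (pr A)%:E.
Proof. by move=> mA; rewrite /pr fineK // fin_num_measure. Qed.

Lemma pr_ge0 A : 0 <= pr A.
Proof. by rewrite /pr fine_ge0. Qed.

Lemma pr_le1 A : measurable A -> pr A <= 1.
Proof. by move=> mA; rewrite -lee_fin -prE // probability_le1. Qed.

Lemma pr_le A B : measurable A -> measurable B -> A `<=` B -> pr A <= pr B.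
Proof. by move=> mA mB AB; rewrite -lee_fin -!prE // le_measure ?inE. Qed.

Lemma prT : pr setT = 1.
Proof. by rewrite /pr probability_setT. Qed.

Lemma pr_split A B : measurable A -> measurable B ->
  pr A = pr (A `&` B) + pr (A `&` ~` B).
Proof.
move=> mA mB.
have mAB : measurable (A `&` B) by exact: measurableI.
have mAnB : measurable (A `&` ~` B) by apply: measurableI => //; exact: measurableC.
apply/eqP; rewrite -(@eqe R) EFinD -!prE //.
rewrite -measureU //.
  by rewrite -setIUr setUCr setIT.
by apply/seteqP; split => t // [[_ ?] [_ ?]].
Qed.

Lemma mle (Z : {RV P >-> R}) r : measurable [set t | Z t <= r].
Proof.
rewrite (_ : [set t | Z t <= r] = Z @^-1` `]-oo, r]); first exact: measurable_funPTI.
by apply/seteqP; split => t /=; rewrite in_itv.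
Qed.

Lemma FrE (Z : {RV P >-> R}) r : Fr Z r = pr [set t | Z t <= r].
Proof.
rewrite /Fr /cdf /pr /distribution /pushforward; congr (fine (P _)); apply/seteqP; split => t /=; rewrite in_itv /= ?andbT //.
Qed.

Lemma Fr01 (Z : {RV P >-> R}) r : 0 <= Fr Z r <= 1.
Proof. by rewrite FrE pr_ge0 pr_le1 //; exact: mle. Qed.

Lemma Fr_le (Z : {RV P >-> R}) r s : r <= s -> Fr Z r <= Fr Z s.
Proof.
move=> rs; rewrite !FrE; apply: pr_le; try exact: mle.
by move=> t /= /le_trans; apply.
Qed.

Lemma mcap n (F : 'I_n -> set T) : (forall i, measurable (F i)) ->
  measurable [set t | forall i, F i t].
Proof.
move=> mF.
rewrite (_ : [set t | forall i, F i t] = \bigcap_(i in setT) F i).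
  by apply: fin_bigcap_measurable => //; exact: finite_setT.
by apply/seteqP; split => t /= H i //; apply: H.
Qed.

Lemma Fr_hi (Z : {RV P >-> R}) e : 0 < e -> exists r, 1 - e < Fr Z r.
Proof.
move=> e0; have := cvg_cdfy1 Z; case/fine_cvgP => _ /cvgrPdist_lt /(_ e e0) [M [_ HM]].
exists (M + 1); have := HM (M + 1) ltac:(lra) => /=.
rewrite -/(Fr Z (M + 1)) => H.
have := ler_norm (1 - Fr Z (M + 1)); lra.
Qed.

Lemma Fr_lo (Z : {RV P >-> R}) e : 0 < e -> exists r, Fr Z r < e.
Proof.
move=> e0; have := cvg_cdfNy0 Z; case/fine_cvgP => _ /cvgrPdist_lt /(_ e e0) [M [_ HM]].
exists (M - 1); have := HM (M - 1) ltac:(lra) => /=.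
rewrite -/(Fr Z (M - 1)) => H.
rewrite sub0r normrN in H; have := ler_norm (Fr Z (M - 1)); lra.
Qed.
End pr.
Section var.
Context {d : measure_display} {T : measurableType d} {R : realType} (P : probability T R).

Lemma cont_delta (f : R -> R) q e : continuous f -> 0 < e ->
  exists2 dl, 0 < dl & forall x, `|q - x| < dl -> `|f q - f x| < e.
Proof.
move=> cf e0; have /cvgrPdist_lt /(_ e e0) /nbhs_ballP [dl dl0 H] := cf q.
by exists dl => // x qx; apply: H; rewrite /ball /=.
Qed.

Lemma VaR_q (Z : {RV P >-> R}) a : continuous (Fr Z) -> 0 < a < 1 ->
  exists q, VaR Z a = q%:E /\ Fr Z q = a.
Proof.
move=> cF /andP[a0 a1].
set S := [set x | a <= Fr Z x].
have [r1 Hr1] : exists r, 1 - (1 - a) < Fr Z r by apply: (Fr_hi P); lra.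
have [r0 Hr0] := Fr_lo P Z a a0.
have lbS : lbound S r0.
  move=> x; rewrite /S /= => ax; rewrite leNgt; apply/negP => xr0.
  have := Fr_le P Z _ _ (ltW xr0); lra.
have hl : has_lbound S by exists r0.
have ne : S !=set0 by exists r1; rewrite /S /=; lra.
exists (inf S); split; first by rewrite /VaR ereal_inf_EFin.
have qS : forall x, S x -> inf S <= x by exact: ge_inf.
apply/eqP; rewrite eq_le; apply/andP; split.
- rewrite leNgt; apply/negP => Hq.
  have [dl dl0 Hd] := cont_delta _ (inf S) _ cF (ltac:(lra) : 0 < Fr Z (inf S) - a).
  have := Hd (inf S - dl / 2); rewrite opprB addrC subrK ger0_norm; last lra.
  move=> /(_ ltac:(lra)) H.
  have : S (inf S - dl / 2).
    rewrite /S /=; have := ler_norm (Fr Z (inf S) - Fr Z (inf S - dl / 2)); lra.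
  move/qS; lra.
- rewrite leNgt; apply/negP => Hq.
  have [dl dl0 Hd] := cont_delta _ (inf S) _ cF (ltac:(lra) : 0 < a - Fr Z (inf S)).
  have hi : has_inf S by split.
  have [s Ss slt] := inf_adherent dl0 hi.
  have := qS _ Ss => sge.
  have := Hd s; rewrite distrC ger0_norm; last lra.
  move=> /(_ ltac:(lra)) H.
  move: Ss; rewrite /S /= => Ss; move: H; rewrite distrC => H; have := ler_norm (Fr Z s - Fr Z (inf S)); lra.
Qed.

Lemma VaR_lt0 (Z : {RV P >-> R}) a t : a <= 0 -> (VaR Z a < (Z t)%:E)%E.
Proof.
move=> a0; apply: (@le_lt_trans _ _ (Z t - 1)%:E); last by rewrite lte_fin; lra.
apply: ereal_inf_lbound; exists (Z t - 1) => //=.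
have := Fr01 P Z (Z t - 1); lra.
Qed.
End var.
Section xy.
Context {dd : measure_display} {T : measurableType dd} {R : realType} (P : probability T R).

Lemma pr_cap_compl (B N : set T) : measurable B -> measurable N ->
  pr P (B `&` ~` N) = pr P B - pr P (B `&` N).
Proof. move=> mB mN; rewrite (pr_split P B N mB mN); lra. Qed.

Lemma pr_compl (N : set T) : measurable N -> pr P (~` N) = 1 - pr P N.
Proof. by move=> mN; rewrite -(setTI (~` N)) pr_cap_compl // setTI (prT P). Qed.

Lemma joint_xy d (Z : 'I_d -> {RV P >-> R}) (W : {RV P >-> R}) a w :
  joint_cdf (xy Z W) (av a w) =
  pr P ([set t | forall i, Z i t <= a i] `&` [set t | W t <= w]).
Proof.
rewrite /joint_cdf; congr (fine (P _)); apply/seteqP; split => t /=.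
- move=> H; split.
  + by move=> j; have := H (lift ord_max j); rewrite /xy /av liftK.
  + by have := H ord_max; rewrite /xy /av unlift_none.
- move=> [HN HV] i; rewrite /xy /av; case: unliftP => [j _|_] //; exact: HN.
Qed.

Lemma Fr_xy d (Z : 'I_d -> {RV P >-> R}) (W : {RV P >-> R}) a w :
  (fun i => Fr (xy Z W i) (av a w i)) = av (fun j => Fr (Z j) (a j)) (Fr W w).
Proof.
by apply/funext => i; rewrite /xy /av; case: unliftP => [j _|_].
Qed.
End xy.
Theorem lemma3p2 (R : realType) (d : nat)
  (dT : measure_display) (T : measurableType dT) (P : probability T R)
  (X : 'I_d -> {RV P >-> R}) (Y : {RV P >-> R})
  (dT' : measure_display) (T' : measurableType dT') (P' : probability T' R)
  (U : 'I_d -> {RV P' >-> R}) (V : {RV P' >-> R})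
  (C : ('I_d.+1 -> R) -> R) (alpha : 'I_d -> R) :
  (0 < d)%N ->
  (forall i, continuous (Fr (X i) : R -> R)) -> continuous (Fr Y : R -> R) ->
  copula_of C (xy X Y) ->
  (forall i u, 0 <= u <= 1 -> Fr (U i) u = u) ->
  (forall v, 0 <= v <= 1 -> Fr V v = v) ->
  copula_of C (xy U V) ->
  (forall i, 0 <= alpha i < 1) ->
  C (av alpha 1) < 1 ->
  let AU := [set t | exists i, alpha i < U i t] in
  let AX := [set t | exists i, (VaR (X i) (alpha i) < (X i t)%:E)%E] in
  let h := fun v : R => (v - C (av alpha v)) / (1 - C (av alpha 1)) in
  [/\ (forall v, 0 <= v <= 1 -> condprob P' [set t | V t <= v] AU = h v),
      distortion h &
      (forall y : R, condprob P [set t | Y t <= y] AX = h (Fr Y y))].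
Proof.
move=> d0 cX cY [copX jX] FU FV [copU jU] ha C1 AU AX h.
set NU := [set t | forall i, U i t <= alpha i].
have mNU : measurable NU by apply: mcap => i; exact: mle.
have AUE : AU = ~` NU.
  apply/seteqP; split => t /=.
  - by move=> [i Hi] H; have := H i; rewrite leNgt Hi.
  - move=> /existsNP [i /negP]; rewrite -ltNge => Hi; by exists i.
have key : forall w, 0 <= w <= 1 -> C (av alpha w) = pr P' (NU `&` [set t | V t <= w]).
  move=> w w01; rewrite -joint_xy jU Fr_xy FV //; congr (C (av _ _)).
  by apply/funext => j; have /andP[h0 h1] := ha j; rewrite FU // h0 ltW.
have mB' : forall v, measurable [set t | V t <= v] by move=> v; exact: mle.
have prV : forall v, 0 <= v <= 1 -> pr P' [set t | V t <= v] = v.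
  by move=> v v01; rewrite -FrE FV.
have CN1 : C (av alpha 1) = pr P' NU.
  rewrite key ?ler01 ?lexx // (pr_split P' NU [set t | V t <= 1]) //.
  suff : pr P' (NU `&` ~` [set t | V t <= 1]) <= 0.
    by have := pr_ge0 P' (NU `&` ~` [set t | V t <= 1]); lra.
  have H : pr P' (NU `&` ~` [set t | V t <= 1]) <= pr P' (~` [set t | V t <= 1]).
    apply: pr_le; last by move=> t [].
    - by apply: measurableI => //; exact: measurableC.
    - exact: measurableC.
  by rewrite pr_compl // prV ?ler01 ?lexx // subrr in H.
have prAU : pr P' AU = 1 - C (av alpha 1) by rewrite AUE pr_compl // CN1.
have num : forall v, 0 <= v <= 1 ->
    pr P' ([set t | V t <= v] `&` AU) = v - C (av alpha v).
  move=> v v01; rewrite AUE pr_cap_compl // prV // key // setIC //.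
have partA : forall v, 0 <= v <= 1 -> condprob P' [set t | V t <= v] AU = h v.
  by move=> v v01; rewrite /condprob -/(pr P' _) -/(pr P' AU) num // prAU.
have mAU : measurable AU by rewrite AUE; exact: measurableC.
have den0 : 0 < 1 - C (av alpha 1) by lra.
have hE : forall v, 0 <= v <= 1 -> h v = pr P' ([set t | V t <= v] `&` AU) / (1 - C (av alpha 1)).
  by move=> v v01; rewrite num.
have distH : distortion h.
  split.
  - move=> v v01; rewrite hE //; apply/andP; split.
      by apply: divr_ge0; [exact: pr_ge0 | exact: ltW].
    rewrite ler_pdivrMr // mul1r -prAU; apply: pr_le => //.
      exact: measurableI.
  - move=> v w v0 vw w1.
    have v01 : 0 <= v <= 1 by rewrite v0 (le_trans vw w1).
    have w01 : 0 <= w <= 1 by rewrite w1 (le_trans v0 vw).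
    rewrite !hE //.
    apply: ler_wpM2r; first by rewrite invr_ge0 ltW.
    apply: pr_le; try exact: measurableI.
    by move=> t [/= Ht HA]; split => //=; exact: le_trans vw.
  - have H0 : pr P' ([set t | V t <= 0] `&` AU) <= pr P' [set t | V t <= 0].
      by apply: pr_le => //; exact: measurableI.
    rewrite prV ?lexx ?ler01 // in H0.
    rewrite hE ?lexx ?ler01 //.
    have H1 := pr_ge0 P' ([set t | V t <= 0] `&` AU).
    have -> : pr P' ([set t | V t <= 0] `&` AU) = 0 by lra.
    by rewrite mul0r.
  - by rewrite /h divff //; apply/eqP => /eqP; lra.
have lip : forall w, 0 <= w <= 1 -> 0 <= C (av alpha 1) - C (av alpha w) <= 1 - w.
  move=> w w01; rewrite CN1 key // (pr_split P' NU [set t | V t <= w]) //.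
  have H : pr P' (NU `&` ~` [set t | V t <= w]) <= pr P' (~` [set t | V t <= w]).
    apply: pr_le; last by move=> t [].
    - by apply: measurableI => //; exact: measurableC.
    - exact: measurableC.
  rewrite pr_compl // prV // in H.
  have := pr_ge0 P' (NU `&` ~` [set t | V t <= w]).
  move=> H0; apply/andP; split; lra.
split => //.
move=> y.
have Fy01 := Fr01 P Y y.
have mBY : forall r, measurable [set t | Y t <= r] by move=> r; exact: mle.
case: (pselect (exists k, alpha k <= 0)) => [[k hk]|hno].
  have AXT : AX = setT.
    by apply/seteqP; split => // t _; exists k; exact: VaR_lt0.
  have C0 : forall w, 0 <= w <= 1 -> C (av alpha w) = 0.
    move=> w w01; rewrite key //.
    have H : pr P' (NU `&` [set t | V t <= w]) <= pr P' [set t | U k t <= alpha k].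
      apply: pr_le; [exact: measurableI | exact: mle | by move=> t [/= /(_ k)]].
    rewrite -FrE FU in H; last by have /andP[h0 h1] := ha k; rewrite h0 ltW.
    have := pr_ge0 P' (NU `&` [set t | V t <= w]); lra.
  rewrite /condprob AXT setIT -/(pr P _) -/(pr P setT) prT -FrE /h.
  by rewrite !C0 ?lexx ?ler01 // !subr0 divr1.
have hpos : forall i, 0 < alpha i < 1.
  move=> i; have /andP[h0 h1] := ha i; rewrite h1 andbT lt_neqAle h0 andbT.
  by apply/eqP => Hi; apply: hno; exists i; rewrite -Hi.
have /fin_all_exists [q hq] : forall i, exists q : R,
    VaR (X i) (alpha i) = q%:E /\ Fr (X i) q = alpha i.
  by move=> i; exact: VaR_q.
set NX := [set t | forall i, X i t <= q i].
have mNX : measurable NX by apply: mcap => i; exact: mle.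
have AXE : AX = ~` NX.
  apply/seteqP; split => t /=.
  - by move=> [i]; rewrite (proj1 (hq i)) lte_fin => Hi H; have := H i; rewrite leNgt Hi.
  - move=> /existsNP [i /negP]; rewrite -ltNge => Hi; exists i.
    by rewrite (proj1 (hq i)) lte_fin.
have jointX : forall r, pr P (NX `&` [set t | Y t <= r]) = C (av alpha (Fr Y r)).
  move=> r; rewrite -joint_xy jX Fr_xy; congr (C (av _ _)).
  by apply/funext => j; rewrite (proj2 (hq j)).
have bnd : forall r, 0 <= pr P NX - C (av alpha (Fr Y r)) <= 1 - Fr Y r.
  move=> r; rewrite -jointX (pr_split P NX [set t | Y t <= r]) //.
  have H : pr P (NX `&` ~` [set t | Y t <= r]) <= pr P (~` [set t | Y t <= r]).
    apply: pr_le; last by move=> t [].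
    - by apply: measurableI => //; exact: measurableC.
    - exact: measurableC.
  rewrite pr_compl // -FrE in H.
  have := pr_ge0 P (NX `&` ~` [set t | Y t <= r]).
  move=> H0; apply/andP; split; lra.
have prNX : pr P NX = C (av alpha 1).
  apply/eqP; rewrite eq_le; apply/andP; split; rewrite leNgt; apply/negP => H.
  - have [r Hr] := Fr_hi P Y (pr P NX - C (av alpha 1)) ltac:(lra).
    have := bnd r; have := lip (Fr Y r) (Fr01 P Y r); lra.
  - have [r Hr] := Fr_hi P Y (C (av alpha 1) - pr P NX) ltac:(lra).
    have := bnd r; have := lip (Fr Y r) (Fr01 P Y r); lra.
rewrite /condprob -/(pr P _) -/(pr P AX) AXE pr_cap_compl // pr_compl // -FrE prNX.
by rewrite setIC jointX.
Qed.
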